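(* (i) The graph with a single vertex and no arcs is a $2$-gadget. (ii) The directed cycle on three vertices (vertices $1,2,3$, arcs $(1,2),(2,3),(3,1)$) is a $3$-gadget (with any of its vertices as distinguished vertex $1$). (iii) Let $D$ be the oriented graph on vertex set $\{0,1,2,3,4,5\}$ with the 15 arcs $(1,0),(0,2),(2,1),(4,5),(5,3),(3,4),(5,0),(3,1),(4,2),(0,3),(1,4),(2,5),(0,4),(1,5),(2,3)$. Then $D$ is a $4$-gadget when vertex $4$ is taken as the distinguished first vertex, i.e. there are a $D$-function $f$ over $[4]$ and a function $\phi:[4]^{5}\to[4]$ such that $D$ is not $4$-solvable and every $x\in[4]^6$ with $f_v(x)\ne x_v$ for all $v$ satisfies $x_4=\phi(x_0,x_1,x_2,x_3,x_5)$.
   Context: A directed graph $D=(V,E)$ has arcs $E \subseteq \{(u,v)\in V^2 : u \neq v\}$; it is an oriented graph if it never contains both $(u,v)$ and $(v,u)$. $N^-(v)=\{u:(u,v)\in E\}$. For $q\ge2$ let $[q]=\{0,\dots,q-1\}$. A $D$-function over $[q]$ is a map $f=(f_v)_{v\in V}:[q]^V\to[q]^V$ with each $f_v(x)$ depending only on $(x_u)_{u\in N^-(v)}$. $D$ is $q$-solvable if some $D$-function $f$ over $[q]$ has the property that for every $x\in[q]^V$ there is $v$ with $f_v(x)=x_v$. A $q$-gadget is an oriented graph $D$ with vertices labelled $1,\dots,n$ (vertex $1$ being distinguished) which is not $q$-solvable, but for which there exist a $D$-function $f$ over $[q]$ and a function $\phi:[q]^{n-1}\to[q]$ such that every $x\in[q]^n$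 with $f_v(x)\ne x_v$ for all $v$ satisfies $x_1=\phi(x_2,\dots,x_n)$. *)

(* Defs.v *)
From mathcomp Require Import all_boot.
Set Implicit Arguments. Unset Strict Implicit. Unset Printing Implicit Defensive.

(* A directed graph on vertex set 'I_n is given by its arc relation E : rel 'I_n,
   E u v meaning (u,v) is an arc.  Configurations x in [q]^V are functions 'I_n -> 'I_q. *)

Definition oriented_graph (n : nat) (E : rel 'I_n) : Prop :=
  forall u v : 'I_n, E u v -> u != v /\ ~~ E v u.

Definition D_function (n q : nat) (E : rel 'I_n)
    (f : ('I_n -> 'I_q) -> 'I_n -> 'I_q) : Prop :=
  forall (v : 'I_n) (x y : 'I_n -> 'I_q),
    (forall u : 'I_n, E u v -> x u = y u) -> f x v = f y v.

Definition q_solvable (n q : nat) (E : rel 'I_n) : Prop :=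
  exists f : ('I_n -> 'I_q) -> 'I_n -> 'I_q,
    D_function E f /\ forall x : 'I_n -> 'I_q, exists v : 'I_n, f x v = x v.

(* The function phi : [q]^{n-1} -> [q]
   of the remaining coordinates is represented as a function of the whole
   configuration that does not depend on the coordinate d. *)
Definition q_gadget (n q : nat) (E : rel 'I_n) (d : 'I_n) : Prop :=
  oriented_graph E /\ ~ q_solvable q E /\
  exists (f : ('I_n -> 'I_q) -> 'I_n -> 'I_q) (phi : ('I_n -> 'I_q) -> 'I_q),
    D_function E f /\
    (forall x y : 'I_n -> 'I_q, (forall v, v != d -> x v = y v) -> phi x = phi y) /\
    (forall x : 'I_n -> 'I_q, (forall v, f x v <> x v) -> x d = phi x).

Definition arcs_rel (n : nat) (s : seq (nat * nat)) : rel 'I_n :=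
  fun u v => (nat_of_ord u, nat_of_ord v) \in s.

Definition single_vertex : rel 'I_1 := fun _ _ => false.

(* directed 3-cycle 1->2->3->1, vertices relabelled 0,1,2 *)
Definition cycle3 : rel 'I_3 := @arcs_rel 3 [:: (0,1); (1,2); (2,0)].

Definition D6 : rel 'I_6 := @arcs_rel 6
  [:: (1,0); (0,2); (2,1); (4,5); (5,3); (3,4); (5,0); (3,1); (4,2);
      (0,3); (1,4); (2,5); (0,4); (1,5); (2,3)].

(* Main.v *)
Require Import Defs.
From mathcomp Require Import all_boot.
Set Implicit Arguments. Unset Strict Implicit. Unset Printing Implicit Defensive.

Definition o0 : 'I_4 := @Ordinal 4 0 isT.
Definition o1 : 'I_4 := @Ordinal 4 1 isT.
Definition o2 : 'I_4 := @Ordinal 4 2 isT.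
Definition o3 : 'I_4 := @Ordinal 4 3 isT.
Definition ords4 : seq 'I_4 := [:: o0; o1; o2; o3].
Lemma mem_ords4 (x : 'I_4) : x \in ords4.
Proof. by case: x => [[|[|[|[|n]]]] Hn]. Qed.

Definition all4 (P : 'I_4 -> bool) := all P ords4.
Definition has4 (P : 'I_4 -> bool) := has P ords4.
Lemma all4P (P : pred (ordinal 4)) : all4 P -> forall x, P x.
Proof. by move=> /allP H x; apply: H; apply: mem_ords4. Qed.
Lemma has4P (P : pred (ordinal 4)) : has4 P -> exists x, P x.
Proof. by case/hasP=> x _ Hx; exists x. Qed.
Lemma has4I (P : pred (ordinal 4)) x : P x -> has4 P.
Proof. by move=> Hx; apply/hasP; exists x => //; apply: mem_ords4. Qed.

Definition tab {T : Type} (b0 b1 b2 b3 : T) (y : 'I_4) : T :=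
  match val y with 0 => b0 | 1 => b1 | 2 => b2 | _ => b3 end.
Lemma tabE {T : Type} (g : 'I_4 -> T) : g =1 tab (g o0) (g o1) (g o2) (g o3).
Proof.
case=> [[|[|[|[|n]]]] Hn] //=; rewrite /tab /=; congr g; exact/val_inj.
Qed.

Definition ok1b (g : 'I_4 -> 'I_4) (a : 'I_4) : bool :=
  all4 (fun al => has4 (fun y => (g y != a) && (y != al))).
Definition ok2b (g : 'I_4 -> 'I_4) (a : 'I_4) : bool :=
  all4 (fun al => all4 (fun be => has4 (fun y => [&& g y != a, y != al & y != be]))).

Lemma ok1_ext g h a : g =1 h -> ok1b g a = ok1b h a.
Proof. by move=> E; apply: eq_all => al; apply: eq_has => y; rewrite /= E. Qed.
Lemma ok2_ext g h a : g =1 h -> ok2b g a = ok2b h a.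
Proof.
by move=> E; apply: eq_all => al; apply: eq_all => be; apply: eq_has => y; rewrite /= E.
Qed.
Lemma ok1P g a : ok1b g a -> forall al, exists y, g y <> a /\ y <> al.
Proof.
move=> H al; have /has4P[y /andP[/eqP H1 /eqP H2]] := all4P H al; by exists y.
Qed.
Lemma ok2P g a : ok2b g a -> forall al be, exists y, [/\ g y <> a, y <> al & y <> be].
Proof.
move=> H al be; have /has4P[y /and3P[/eqP H1 /eqP H2 /eqP H3]] := all4P (all4P H al) be.
by exists y.
Qed.

Lemma La_b : all4 (fun b0 => all4 (fun b1 => all4 (fun b2 => all4 (fun b3 =>
   has4 (fun a => ok2b (tab b0 b1 b2 b3) a))))).
Proof. by vm_compute. Qed.
Lemma La g : exists a, ok2b g a.
Proof.
have /has4P[a Ha] := all4P (all4P (all4P (all4P La_b (g o0)) (g o1)) (g o2)) (g o3).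
by exists a; rewrite (ok2_ext _ (tabE g)).
Qed.

Lemma Lb_b : all4 (fun b0 => all4 (fun b1 => all4 (fun b2 => all4 (fun b3 =>
   all4 (fun a => all4 (fun b => (a != b) ==> ok1b (tab b0 b1 b2 b3) a || ok1b (tab b0 b1 b2 b3) b)))))).
Proof. by vm_compute. Qed.
Lemma Lb g a b : a != b -> ok1b g a || ok1b g b.
Proof.
move=> Hab.
have := all4P (all4P (all4P (all4P (all4P (all4P Lb_b (g o0)) (g o1)) (g o2)) (g o3)) a) b.
by rewrite Hab /= -!(ok1_ext _ (tabE g)).
Qed.

Definition opts : seq (option 'I_4) := [:: None; Some o0; Some o1; Some o2; Some o3].
Definition allo (P : option 'I_4 -> bool) := all P opts.
Lemma alloP (P : pred (option (ordinal 4))) : allo P -> forall x, P x.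
Proof.
move=> /allP H x; apply: H; case: x => [x|] //; rewrite inE /=.
by have := mem_ords4 x; rewrite !inE => /or4P[] /eqP -> .
Qed.

Lemma Lc_b : allo (fun m0 => allo (fun m1 => allo (fun m2 => allo (fun m3 =>
  has4 (fun a2 => all4 (fun a0 => all4 (fun a0' => (a0 != a0') ==>
     (tab m0 m1 m2 m3 a0 != Some a2) || (tab m0 m1 m2 m3 a0' != Some a2)))))))).
Proof. by vm_compute. Qed.
Lemma Lc (m : 'I_4 -> option 'I_4) : exists a2, forall a0 a0', a0 != a0' ->
   (m a0 != Some a2) || (m a0' != Some a2).
Proof.
have /has4P[a2 H] := alloP (alloP (alloP (alloP Lc_b (m o0)) (m o1)) (m o2)) (m o3).
exists a2 => a0 a0' Hne; have := all4P (all4P H a0) a0'.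
by rewrite Hne -!(tabE m).
Qed.

Definition allb (P : bool -> bool) := all P [:: false; true].
Lemma allbP (P : pred bool) : allb P -> forall x, P x.
Proof. by move=> /andP[H0 /andP[H1 _]] [|]. Qed.
Lemma Ld_b : allb (fun p0 => allb (fun p1 => allb (fun p2 => allb (fun p3 =>
  allb (fun q0 => allb (fun q1 => allb (fun q2 => allb (fun q3 =>
  all4 (fun a => all4 (fun b => (a != b) ==> tab p0 p1 p2 p3 a || tab p0 p1 p2 p3 b)) ==>
  all4 (fun a => all4 (fun b => (a != b) ==> tab q0 q1 q2 q3 a || tab q0 q1 q2 q3 b)) ==>
  has4 (fun a => tab p0 p1 p2 p3 a && tab q0 q1 q2 q3 a))))))))).
Proof. by vm_compute. Qed.
Lemma Ld (p q : 'I_4 -> bool) :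
  (forall a b, a != b -> p a || p b) -> (forall a b, a != b -> q a || q b) ->
  exists a, p a && q a.
Proof.
move=> Hp Hq.
have := allbP (allbP (allbP (allbP (allbP (allbP (allbP (allbP Ld_b
   (p o0)) (p o1)) (p o2)) (p o3)) (q o0)) (q o1)) (q o2)) (q o3).
have E1 : all4 (fun a => all4 (fun b => (a != b) ==> tab (p o0) (p o1) (p o2) (p o3) a || tab (p o0) (p o1) (p o2) (p o3) b)).
  apply/allP => a _; apply/allP => b _; apply/implyP => /Hp; by rewrite -!(tabE p).
have E2 : all4 (fun a => all4 (fun b => (a != b) ==> tab (q o0) (q o1) (q o2) (q o3) a || tab (q o0) (q o1) (q o2) (q o3) b)).
  apply/allP => a _; apply/allP => b _; apply/implyP => /Hq; by rewrite -!(tabE q).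
rewrite E1 E2 /= => /has4P[a]; rewrite -(tabE p) -(tabE q) => H; by exists a.
Qed.

Definition w0 : 'I_6 := @Ordinal 6 0 isT.
Definition w1 : 'I_6 := @Ordinal 6 1 isT.
Definition w2 : 'I_6 := @Ordinal 6 2 isT.
Definition w3 : 'I_6 := @Ordinal 6 3 isT.
Definition w4 : 'I_6 := @Ordinal 6 4 isT.
Definition w5 : 'I_6 := @Ordinal 6 5 isT.
Definition mk6 (a0 a1 a2 a3 a4 a5 : 'I_4) (i : 'I_6) : 'I_4 :=
  match val i with 0 => a0 | 1 => a1 | 2 => a2 | 3 => a3 | 4 => a4 | _ => a5 end.

Lemma I6_cases (v : 'I_6) : v = w0 \/ v = w1 \/ v = w2 \/ v = w3 \/ v = w4 \/ v = w5.
Proof.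
case: v => [[|[|[|[|[|[|n]]]]]] Hn] //;
  do ?[by left; exact/val_inj | right]; exact/val_inj.
Qed.

Lemma in0 u : D6 u w0 -> (val u == 1) || (val u == 5).
Proof. by case: u => [[|[|[|[|[|[|n]]]]]] Hn]. Qed.
Lemma in1 u : D6 u w1 -> (val u == 2) || (val u == 3).
Proof. by case: u => [[|[|[|[|[|[|n]]]]]] Hn]. Qed.
Lemma in2 u : D6 u w2 -> (val u == 0) || (val u == 4).
Proof. by case: u => [[|[|[|[|[|[|n]]]]]] Hn]. Qed.
Lemma in3 u : D6 u w3 -> [|| val u == 5, val u == 0 | val u == 2].
Proof. by case: u => [[|[|[|[|[|[|n]]]]]] Hn]. Qed.
Lemma in4 u : D6 u w4 -> [|| val u == 3, val u == 1 | val u == 0].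
Proof. by case: u => [[|[|[|[|[|[|n]]]]]] Hn]. Qed.
Lemma in5 u : D6 u w5 -> [|| val u == 4, val u == 2 | val u == 1].
Proof. by case: u => [[|[|[|[|[|[|n]]]]]] Hn]. Qed.

Lemma D6_not_solvable : ~ q_solvable 4 D6.
Proof.
case=> f [Df Hf].
pose F0 b c := f (mk6 o0 b o0 o0 o0 c) w0.
pose F1 b c := f (mk6 o0 o0 b c o0 o0) w1.
pose F2 b c := f (mk6 b o0 o0 o0 c o0) w2.
pose F3 c b d := f (mk6 b o0 d o0 o0 c) w3.
pose F4 c b d := f (mk6 d b o0 c o0 o0) w4.
pose F5 c b d := f (mk6 o0 d b o0 c o0) w5.
have E0 a0 a1 a2 a3 a4 a5 : f (mk6 a0 a1 a2 a3 a4 a5) w0 = F0 a1 a5.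
  by apply: Df => -[k Hk] /in0 /= /orP[] /eqP Ek; rewrite /mk6 /= Ek.
have E1 a0 a1 a2 a3 a4 a5 : f (mk6 a0 a1 a2 a3 a4 a5) w1 = F1 a2 a3.
  by apply: Df => -[k Hk] /in1 /= /orP[] /eqP Ek; rewrite /mk6 /= Ek.
have E2 a0 a1 a2 a3 a4 a5 : f (mk6 a0 a1 a2 a3 a4 a5) w2 = F2 a0 a4.
  by apply: Df => -[k Hk] /in2 /= /orP[] /eqP Ek; rewrite /mk6 /= Ek.
have E3 a0 a1 a2 a3 a4 a5 : f (mk6 a0 a1 a2 a3 a4 a5) w3 = F3 a5 a0 a2.
  by apply: Df => -[k Hk] /in3 /= /or3P[] /eqP Ek; rewrite /mk6 /= Ek.
have E4 a0 a1 a2 a3 a4 a5 : f (mk6 a0 a1 a2 a3 a4 a5) w4 = F4 a3 a1 a0.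
  by apply: Df => -[k Hk] /in4 /= /or3P[] /eqP Ek; rewrite /mk6 /= Ek.
have E5 a0 a1 a2 a3 a4 a5 : f (mk6 a0 a1 a2 a3 a4 a5) w5 = F5 a4 a2 a1.
  by apply: Df => -[k Hk] /in5 /= /or3P[] /eqP Ek; rewrite /mk6 /= Ek.
have Fin a0 a1 a2 a3 a4 a5 : F0 a1 a5 <> a0 -> F1 a2 a3 <> a1 -> F2 a0 a4 <> a2 ->
    F3 a5 a0 a2 <> a3 -> F4 a3 a1 a0 <> a4 -> F5 a4 a2 a1 <> a5 -> False.
  move=> H0 H1 H2 H3 H4 H5; have [v] := Hf (mk6 a0 a1 a2 a3 a4 a5).
  by case: (I6_cases v) => [|[|[|[|[|]]]]] ->; rewrite ?E0 ?E1 ?E2 ?E3 ?E4 ?E5.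
pose m a0 := [pick a2 | ~~ ok1b (F2 a0) a2].
have Hm a0 a2 : ~~ ok1b (F2 a0) a2 -> m a0 = Some a2.
  move=> Hn; rewrite /m; case: pickP => [a2' Ha2'|/(_ a2)]; last by rewrite Hn.
  case: (eqVneq a2' a2) => [->//|Hne].
  by move: (Lb (F2 a0) Hne); rewrite (negbTE Ha2') (negbTE Hn).
have [a2 Ha2] := Lc m.
have [a1 Ha1] := La (F1 a2).
have [a0 /andP[Hp Hq]] : exists a0, ok1b (F2 a0) a2 && ok1b (F0 a1) a0.
  apply: Ld => [b c Hbc|b c Hbc]; last exact: Lb.
  case: (boolP (ok1b (F2 b) a2)) => //= Hb; case: (boolP (ok1b (F2 c) a2)) => //= Hc.
  by move: (Ha2 b c Hbc); rewrite (Hm _ _ Hb) (Hm _ _ Hc) eqxx.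
have [x4 [Hx4 _]] := ok1P Hp o0.
have [x4' [Hx4' Hne4]] := ok1P Hp x4.
have [e [He HeC]] := ok1P Hq (F5 x4 a2 a1).
have [e' [He' HeC']] := ok1P Hq (F5 x4' a2 a1).
pose P4 x e := has4 (fun x3 => [&& F1 a2 x3 != a1, x3 != F3 e a0 a2 & F4 x3 a1 a0 != x] ).
have Try x ee : F2 a0 x <> a2 -> F0 a1 ee <> a0 -> ee <> F5 x a2 a1 -> P4 x ee -> False.
  move=> Hx Hee HeeC /has4P[x3 /and3P[/eqP H1 /eqP H2 /eqP H3]].
  apply: (Fin a0 a1 a2 x3 x ee) => //; by move/esym.
case: (boolP (P4 x4 e)) => [/(Try _ _ Hx4 He HeC)//|N1].
case: (boolP (P4 x4' e')) => [/(Try _ _ Hx4' He' HeC')//|N2].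
have [x3 [H1 H2 H3]] := ok2P Ha1 (F3 e a0 a2) (F3 e' a0 a2).
have B1 : F4 x3 a1 a0 = x4.
  apply/eqP; apply: contraNT N1 => Hn; apply: (has4I (x:=x3)).
  by rewrite Hn andbT; apply/andP; split; apply/eqP.
have B2 : F4 x3 a1 a0 = x4'.
  apply/eqP; apply: contraNT N2 => Hn; apply: (has4I (x:=x3)).
  by rewrite Hn andbT; apply/andP; split; apply/eqP.
by apply: Hne4; rewrite -B1 -B2.
Qed.

Definition add4 (a b : 'I_4) : 'I_4 := @Ordinal 4 ((a + b) %% 4) (@ltn_pmod _ 4 isT).
Definition neg4 (a : 'I_4) : 'I_4 := @Ordinal 4 ((4 - a) %% 4) (@ltn_pmod _ 4 isT).
Definition sub4 a b := add4 a (neg4 b).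
Definition g0 a1 a5 := neg4 (add4 a1 a5).
Definition g1 a2 a3 := sub4 a2 a3.
Definition g2 a0 a4 := add4 a0 a4.
Definition g3 a5 a0 a2 := add4 (add4 a5 a0) a2.
Definition g4 a3 a1 a0 := sub4 (add4 a1 a3) a0.
Definition g5 a4 a2 a1 := sub4 (sub4 a4 a1) a2.
Definition phiC (a0 a1 a2 a3 a5 : 'I_4) : 'I_4 :=
  let al := sub4 (add4 a1 a3) a0 in let be := sub4 a2 a0 in
  let ga := add4 (add4 a5 a1) a2 in
  head o0 (filter (fun k => [&& k != al, k != be & k != ga]) ords4).

Lemma gadget_b : all4 (fun a0 => all4 (fun a1 => all4 (fun a2 => all4 (fun a3 =>
  all4 (fun a4 => all4 (fun a5 =>
  [&& g0 a1 a5 != a0, g1 a2 a3 != a1, g2 a0 a4 != a2, g3 a5 a0 a2 != a3,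
      g4 a3 a1 a0 != a4 & g5 a4 a2 a1 != a5] ==> (a4 == phiC a0 a1 a2 a3 a5))))))).
Proof. by vm_compute. Qed.

Definition fD6 (x : 'I_6 -> 'I_4) (v : 'I_6) : 'I_4 :=
  match val v with
  | 0 => g0 (x w1) (x w5)
  | 1 => g1 (x w2) (x w3)
  | 2 => g2 (x w0) (x w4)
  | 3 => g3 (x w5) (x w0) (x w2)
  | 4 => g4 (x w3) (x w1) (x w0)
  | _ => g5 (x w4) (x w2) (x w1)
  end.
Definition phiD6 (x : 'I_6 -> 'I_4) := phiC (x w0) (x w1) (x w2) (x w3) (x w5).

Lemma oriented_D6 : oriented_graph D6.
Proof.
move=> u v; case: u => [[|[|[|[|[|[|n]]]]]] Hn]; case: v => [[|[|[|[|[|[|m]]]]]] Hm] //.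
Qed.

Lemma D6_gadget : q_gadget 4 D6 (inord 4 : 'I_6).
Proof.
have I4 : (inord 4 : 'I_6) = w4 by apply/val_inj; rewrite /= inordK.
split; first exact: oriented_D6.
split; first exact: D6_not_solvable.
exists fD6, phiD6; split; [|split].
- move=> v x y; case: (I6_cases v) => [|[|[|[|[|]]]]] -> H; rewrite /fD6; [change (g0 (x w1) (x w5) = g0 (y w1) (y w5)) | change (g1 (x w2) (x w3) = g1 (y w2) (y w3)) | change (g2 (x w0) (x w4) = g2 (y w0) (y w4)) | change (g3 (x w5) (x w0) (x w2) = g3 (y w5) (y w0) (y w2)) | change (g4 (x w3) (x w1) (x w0) = g4 (y w3) (y w1) (y w0)) | change (g5 (x w4) (x w2) (x w1) = g5 (y w4) (y w2) (y w1))]; f_equal; by apply: H.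

- move=> x y H; rewrite I4 in H; rewrite /phiD6 !H //.
- move=> x H; rewrite I4.
  have := all4P (all4P (all4P (all4P (all4P (all4P gadget_b (x w0)) (x w1)) (x w2))
     (x w3)) (x w4)) (x w5).
  have := H w0; have := H w1; have := H w2; have := H w3; have := H w4; have := H w5.
  rewrite /fD6 /= => /eqP -> /eqP -> /eqP -> /eqP -> /eqP -> /eqP -> /= /eqP; done.
Qed.

Definition c0 : 'I_3 := @Ordinal 3 0 isT.
Definition c1 : 'I_3 := @Ordinal 3 1 isT.
Definition c2 : 'I_3 := @Ordinal 3 2 isT.
Definition ords3 : seq 'I_3 := [:: c0; c1; c2].
Lemma mem_ords3 (x : 'I_3) : x \in ords3.
Proof. by case: x => [[|[|[|n]]] Hn]. Qed.
Definition all3 (P : pred 'I_3) := all P ords3.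
Definition has3 (P : pred 'I_3) := has P ords3.
Lemma all3P (P : pred 'I_3) : all3 P -> forall x, P x.
Proof. by move=> /allP H x; apply: H; apply: mem_ords3. Qed.
Lemma has3P (P : pred 'I_3) : has3 P -> exists x, P x.
Proof. by case/hasP=> x _ Hx; exists x. Qed.
Definition tab3 {T : Type} (b0 b1 b2 : T) (y : 'I_3) : T :=
  match val y with 0 => b0 | 1 => b1 | _ => b2 end.
Lemma tab3E {T : Type} (g : 'I_3 -> T) : g =1 tab3 (g c0) (g c1) (g c2).
Proof.
case=> [[|[|[|n]]] Hn] //=; rewrite /tab3 /=; congr g; exact/val_inj.
Qed.
Lemma I3_cases (v : 'I_3) : v = c0 \/ v = c1 \/ v = c2.
Proof.
case: v => [[|[|[|n]]] Hn] //; do ?[by left; exact/val_inj | right]; exact/val_inj.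
Qed.
Definition mk3 (a0 a1 a2 : 'I_3) (i : 'I_3) : 'I_3 :=
  match val i with 0 => a0 | 1 => a1 | _ => a2 end.

Lemma cyc_b : all3 (fun p0 => all3 (fun p1 => all3 (fun p2 =>
  all3 (fun q0 => all3 (fun q1 => all3 (fun q2 =>
  all3 (fun r0 => all3 (fun r1 => all3 (fun r2 =>
  has3 (fun x0 => has3 (fun x1 => has3 (fun x2 =>
    [&& tab3 p0 p1 p2 x2 != x0, tab3 q0 q1 q2 x0 != x1 & tab3 r0 r1 r2 x1 != x2])))))))))))).
Proof. by vm_compute. Qed.

Lemma in_c0 u : cycle3 u c0 -> val u == 2. Proof. by case: u => [[|[|[|n]]] Hn]. Qed.
Lemma in_c1 u : cycle3 u c1 -> val u == 0. Proof. by case: u => [[|[|[|n]]] Hn]. Qed.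
Lemma in_c2 u : cycle3 u c2 -> val u == 1. Proof. by case: u => [[|[|[|n]]] Hn]. Qed.

Lemma cycle3_not_solvable : ~ q_solvable 3 cycle3.
Proof.
case=> f [Df Hf].
pose G0 b := f (mk3 c0 c0 b) c0.
pose G1 b := f (mk3 b c0 c0) c1.
pose G2 b := f (mk3 c0 b c0) c2.
have E0 a0 a1 a2 : f (mk3 a0 a1 a2) c0 = G0 a2.
  by apply: Df => -[k Hk] /in_c0 /= /eqP Ek; rewrite /mk3 /= Ek.
have E1 a0 a1 a2 : f (mk3 a0 a1 a2) c1 = G1 a0.
  by apply: Df => -[k Hk] /in_c1 /= /eqP Ek; rewrite /mk3 /= Ek.
have E2 a0 a1 a2 : f (mk3 a0 a1 a2) c2 = G2 a1.
  by apply: Df => -[k Hk] /in_c2 /= /eqP Ek; rewrite /mk3 /= Ek.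
have := all3P (all3P (all3P (all3P (all3P (all3P (all3P (all3P (all3P cyc_b
  (G0 c0)) (G0 c1)) (G0 c2)) (G1 c0)) (G1 c1)) (G1 c2)) (G2 c0)) (G2 c1)) (G2 c2).
case/has3P=> x0 /has3P[x1 /has3P[x2]].
rewrite -(tab3E G0) -(tab3E G1) -(tab3E G2) => /and3P[/eqP H0 /eqP H1 /eqP H2].
have [v] := Hf (mk3 x0 x1 x2).
by case: (I3_cases v) => [|[|]] ->; rewrite ?E0 ?E1 ?E2.
Qed.

Definition fC (x : 'I_3 -> 'I_3) (v : 'I_3) : 'I_3 :=
  match val v with 0 => x c2 | 1 => x c0 | _ => x c1 end.
Definition third (a b : 'I_3) : 'I_3 := head c0 (filter (fun k => (k != a) && (k != b)) ords3).
Definition phiC3 (d : 'I_3) (x : 'I_3 -> 'I_3) : 'I_3 :=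
  match val d with 0 => third (x c1) (x c2) | 1 => third (x c0) (x c2) | _ => third (x c0) (x c1) end.

Lemma third_b : all3 (fun a0 => all3 (fun a1 => all3 (fun a2 =>
  [&& a0 != a1, a1 != a2 & a2 != a0] ==>
  [&& a0 == third a1 a2, a1 == third a0 a2 & a2 == third a0 a1]))).
Proof. by vm_compute. Qed.

Lemma oriented_cycle3 : oriented_graph cycle3.
Proof.
move=> u v; case: u => [[|[|[|n]]] Hn]; case: v => [[|[|[|m]]] Hm] //.
Qed.

Lemma cycle3_gadget (d : 'I_3) : q_gadget 3 cycle3 d.
Proof.
split; first exact: oriented_cycle3.
split; first exact: cycle3_not_solvable.
exists fC, (phiC3 d); split; [|split].
- move=> v x y; case: (I3_cases v) => [|[|]] -> H; rewrite /fC /=; by apply: H.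
- move=> x y H; case: (I3_cases d) => [|[|]] Ed; rewrite Ed in H;
  rewrite /phiC3 Ed /= !H //.
- move=> x H; have := all3P (all3P (all3P third_b (x c0)) (x c1)) (x c2).
  have := H c0; have := H c1; have := H c2; rewrite /fC /=.
  move=> /eqP; rewrite eq_sym => -> /eqP; rewrite eq_sym => -> /eqP; rewrite eq_sym => -> /=.
  case/and3P=> /eqP A0 /eqP A1 /eqP A2.
  by case: (I3_cases d) => [|[|]] ->.
Qed.

Definition b1 : 'I_2 := @Ordinal 2 1 isT.

Lemma single_gadget : q_gadget 2 single_vertex (ord0 : 'I_1).
Proof.
split; first by move=> u v.
split.
- case=> f [Df Hf].
  pose c := f (fun _ => ord0) ord0.
  have Ec x v : f x v = c.
    have -> : v = ord0 by apply/val_inj; case: v => [[|n] Hn].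
    by apply: Df.
  pose x : 'I_1 -> 'I_2 := fun _ => if val c == 0 then b1 else ord0.
  have [v] := Hf x; rewrite Ec /x.
  clear Ec x; clearbody c; by case: c => [[|[|n]] Hn] //= /(congr1 val).
- exists (fun _ _ => ord0), (fun _ => b1); split; [by []|split; first by []].
  move=> x H; have := H ord0; case: (x ord0) => [[|[|n]] Hn] // H0.
  + by exfalso; apply: H0; exact/val_inj.
  + exact/val_inj.
Qed.

Theorem proposition9 :
  q_gadget 2 single_vertex (ord0 : 'I_1) /\
  (forall d : 'I_3, q_gadget 3 cycle3 d) /\
  q_gadget 4 D6 (inord 4 : 'I_6).
Proof.
split; first exact: single_gadget.
split; first exact: cycle3_gadget.
exact: D6_gadget.
Qed.
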